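(* Let $R=\prod_{i=1}^m R_i$ be a finite commutative ring which is the direct product of the rings $R_1,\dots,R_m$, let $K\le R^\times$, and let $\mathcal C=\mathrm{Cyc}(K,R)$. For each $i$ let $\varphi_i:R_i^\times\to R^\times$ be the monomorphism such that the $j$th component of $\varphi_i(x)$ is $x$ for $j=i$ and $1_{R_j}$ for $j\ne i$; let $K_i\le R_i^\times$ be defined by $\varphi_i(K_i)=K\cap\varphi_i(R_i^\times)$, and let $\mathcal C_i=\mathrm{Cyc}(K_i,R_i)$. Put $u=0_R$, $v=1_R$, $u_i=0_{R_i}$, $v_i=1_{R_i}$. Then $$\mathrm{Aut}(\mathcal C)_{u,v}=\prod_{i=1}^m \mathrm{Aut}(\mathcal C_i)_{u_i,v_i},$$ where the right-hand side acts on $R=\prod_i R_i$ componentwise. In particular, $\mathcal C$ is normal if and only if $\mathcal C_i$ is normal for every $i$.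
   Context: All rings have an identity. For a finite commutative ring $R$ and a subgroup $K$ of its multiplicative group $R^\times$, the cyclotomic scheme $\mathrm{Cyc}(K,R)$ is the pair $(R,\mathrm{Rel}(K,R))$, where $\mathrm{Rel}(K,R)$ is the set of binary relations $\{(x,y)\in R\times R:\ y-x\in rK\}$, $r\in R$ (these partition $R\times R$). Its automorphism group $\mathrm{Aut}(\mathcal C)$ is the group of all permutations $f$ of $R$ with $S^f=S$ for every $S\in\mathrm{Rel}(K,R)$. For points $a,b$, $\mathrm{Aut}(\mathcal C)_{a,b}$ is the pointwise stabilizer of $a$ and $b$. $\mathrm{A\Gamma L}_1(R)$ is the group of permutations of $R$ of the form $x\mapsto ax^\sigma+b$ with $a\in R^\times$, $b\in R$, $\sigma\in\mathrm{Aut}(R)$ (ring automorphisms). The scheme $\mathcal C$ is called normal if $\mathrm{Aut}(\mathcal C)\le\mathrm{A\Gamma L}_1(R)$. *)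

(* Defs.v *)
From HB Require Import structures.
From mathcomp Require Import all_boot all_order all_algebra all_fingroup.
Set Implicit Arguments. Unset Strict Implicit. Unset Printing Implicit Defensive.
Import GRing.Theory.
Local Open Scope ring_scope.

Section Cyc.
Variable R : finComUnitRingType.

Definition coset_rK (K : {set {unit R}}) (r : R) : {set R} :=
  [set r * val k | k in K].

Definition cyc_rel (K : {set {unit R}}) (r : R) : {set R * R} :=
  [set xy : R * R | xy.2 - xy.1 \in coset_rK K r].

Definition AutCyc (K : {set {unit R}}) : {set {perm R}} :=
  [set f : {perm R} | [forall r : R,
      [set (f xy.1, f xy.2) | xy in cyc_rel K r] == cyc_rel K r]].

Definition AutCyc_stab (K : {set {unit R}}) (a b : R) : {set {perm R}} :=
  [set f in AutCyc K | (f a == a) && (f b == b)].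

Definition in_AGammaL (f : {perm R}) : Prop :=
  exists (a : {unit R}) (b : R) (s : {rmorphism R -> R}),
    bijective s /\ forall x, f x = val a * s x + b.

Definition cyc_normal (K : {set {unit R}}) : Prop :=
  forall f, f \in AutCyc K -> in_AGammaL f.
End Cyc.

(* R is the direct product of the R_i via the projections pi_i:
   the map x |-> (pi_i x)_i is a bijection onto prod_i R_i *)
Definition is_direct_product (m : nat) (R : finComUnitRingType)
  (Ri : 'I_m -> finComUnitRingType) (pi : forall i, {rmorphism R -> Ri i}) : Prop :=
  (forall x y : R, (forall i, pi i x = pi i y) -> x = y) /\
  (forall y : (forall i, Ri i), exists x : R, forall i, pi i x = y i).

(* K_i = phi_i^{-1}(K cap phi_i(R_i^x)), where phi_i(x) has i-th component x
   and j-th component 1 for j <> i *)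
Definition Kcomp (m : nat) (R : finComUnitRingType)
  (Ri : 'I_m -> finComUnitRingType) (pi : forall i, {rmorphism R -> Ri i})
  (K : {set {unit R}}) (i : 'I_m) : {set {unit (Ri i)}} :=
  [set x : {unit (Ri i)} | [exists k in K,
      (pi i (val k) == val x) && [forall j : 'I_m, (j != i) ==> (pi j (val k) == 1)]]].

(* Main.v *)
Require Import Defs.
From HB Require Import structures.
From mathcomp Require Import all_boot all_order all_algebra all_fingroup.
Set Implicit Arguments. Unset Strict Implicit. Unset Printing Implicit Defensive.
Import GRing.Theory.
Local Open Scope ring_scope.

Section MkR.
Variable R : finComUnitRingType.
Variable h : R -> R.
Hypothesis hD : {morph h : x y / x + y}.
Hypothesis hM : {morph h : x y / x * y}.
Hypothesis h1 : h 1 = 1.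
Definition mkfun (_ : {morph h : x y / x + y}) (_ : {morph h : x y / x * y})
  (_ : h 1 = 1) : R -> R := h.
Lemma mk_nmod : nmod_morphism (mkfun hD hM h1).
Proof.
split => //; rewrite /mkfun.
have e := hD 0 0; rewrite addr0 in e.
by apply: (addrI (h 0)); rewrite addr0 -e.
Qed.
HB.instance Definition _ := GRing.isNmodMorphism.Build R R (mkfun hD hM h1) mk_nmod.
HB.instance Definition _ := GRing.isMonoidMorphism.Build R R (mkfun hD hM h1) (h1, hM).
End MkR.

Section Gen.
Variable R : finComUnitRingType.

Lemma cosetP (K : {set {unit R}}) r x :
  reflect (exists2 k, k \in K & x = r * val k) (x \in coset_rK K r).
Proof. exact: imsetP. Qed.

Lemma autP1 (K : {set {unit R}}) (f : {perm R}) : 1%g \in K ->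
  f \in AutCyc K -> forall x y, f y - f x \in coset_rK K (y - x).
Proof.
move=> K1; rewrite inE => /forallP H x y; move/eqP: (H (y - x)) => E.
have : (f x, f y) \in [set (f xy.1, f xy.2) | xy in cyc_rel K (y - x)].
  apply/imsetP; exists (x, y) => //; rewrite inE /=.
  by apply/cosetP; exists 1%g => //; rewrite mulr1.
by rewrite E inE.
Qed.

Lemma autP2 (K : {set {unit R}}) (f : {perm R}) :
  (forall a b, a \in K -> b \in K -> (a * b)%g \in K) ->
  (forall x y, f y - f x \in coset_rK K (y - x)) -> f \in AutCyc K.
Proof.
move=> KM H; rewrite inE; apply/forallP => r; apply/eqP.
have inj : injective (fun xy : R * R => (f xy.1, f xy.2)).
  by move=> [a b] [c d] /= [/perm_inj -> /perm_inj ->].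
apply/eqP; rewrite eqEcard card_imset // leqnn andbT.
apply/subsetP => _ /imsetP[[x y] Hxy ->]; rewrite inE /= in Hxy *.
case/cosetP: Hxy => k Kk E.
case/cosetP: (H x y) => k' Kk' E'.
rewrite inE /= E'.
by apply/cosetP; exists (k * k')%g; [exact: KM | rewrite E FinRing.val_unitM mulrA].
Qed.

Definition ringlike (K : {set {unit R}}) :=
  forall h : {perm R}, h \in AutCyc_stab K 0 1 ->
    forall x y, h (x + y) = h x + h y /\ h (x * y) = h x * h y.

Lemma normal_iff (K : {set {unit R}}) :
  1%g \in K -> (forall a b, a \in K -> b \in K -> (a * b)%g \in K) ->
  (forall a, a \in K -> (a^-1)%g \in K) ->
  cyc_normal K <-> ringlike K.
Proof.
move=> K1 KM KV; split.
  move=> N h; rewrite inE => /andP[hA /andP[/eqP h0 /eqP h1]].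
  case: (N h hA) => a [b [s [_ E]]].
  have b0 : b = 0 by move: h0; rewrite E rmorph0 mulr0 add0r.
  have a1 : val a = 1 by move: h1; rewrite E rmorph1 mulr1 b0 addr0.
  have hs : forall x, h x = s x by move=> x; rewrite E a1 b0 mul1r addr0.
  by move=> x y; rewrite !hs rmorphD rmorphM.
move=> RL f fA.
case/cosetP: (autP1 K1 fA 0 1) => k Kk E.
rewrite subr0 mul1r in E.
have ku : val k \is a GRing.unit by exact: valP.
pose hf x := (val k)^-1 * (f x - f 0).
have hinj : injective hf.
  move=> x y; rewrite /hf => /(congr1 (fun z => val k * z)).
  by rewrite !mulrA mulrV // !mul1r => /addIr /perm_inj.
pose h := perm hinj.
have hE : forall x, h x = (val k)^-1 * (f x - f 0) by move=> x; rewrite permE.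
have hS : h \in AutCyc_stab K 0 1.
  rewrite inE; apply/andP; split; last first.
    rewrite !hE subrr mulr0 eqxx E mulVr //=. 
  apply: autP2 => // x y; rewrite !hE -mulrBr opprB addrA subrK.
  case/cosetP: (autP1 K1 fA x y) => k' Kk' ->.
  apply/cosetP; exists (k^-1 * k')%g; first by rewrite KM ?KV.
  by rewrite FinRing.val_unitM FinRing.val_unitV mulrCA.
have hD : {morph h : x y / x + y} by move=> x y; case: (RL h hS x y).
have hM : {morph h : x y / x * y} by move=> x y; case: (RL h hS x y).
have h1 : h 1 = 1 by move: hS; rewrite inE => /andP[_ /andP[_ /eqP]].
exists k, (f 0), (mkfun hD hM h1 : {rmorphism R -> R}); split.
  by apply: injF_bij; exact: perm_inj.
move=> x; rewrite /= /mkfun hE mulrA mulrV // mul1r subrK //.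
Qed.

End Gen.

Section Prod.
Variables (m : nat) (R : finComUnitRingType) (Ri : 'I_m -> finComUnitRingType)
  (pi : forall i, {rmorphism R -> Ri i}).
Hypothesis hdp : is_direct_product pi.

Lemma pi_inj x y : (forall i, pi i x = pi i y) -> x = y.
Proof. exact: hdp.1. Qed.

Lemma lift_ex i (a : Ri i) (x0 : R) :
  exists x, pi i x = a /\ forall j, j != i -> pi j x = pi j x0.
Proof.
pose y : forall j, Ri j := fun j =>
  match i =P j with ReflectT e => eq_rect i (fun k => Ri k : Type) a j e
                  | ReflectF _ => pi j x0 end.
case: (proj2 hdp y) => x hx; exists x; split.
  rewrite hx /y; case: (i =P i) => [e|]; last by [].
  by rewrite (eq_axiomK e).
move=> j ne; rewrite hx /y; case: (i =P j) => [e|//].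
by exfalso; move: ne; rewrite -e eqxx.
Qed.

Variable K : {group {unit R}}.

Lemma KcompP i u : reflect (exists2 k, k \in K &
   (pi i (val k) = val u /\ forall j, j != i -> pi j (val k) = 1))
  (u \in Kcomp pi K i).
Proof.
rewrite inE; apply: (iffP existsP) => [[k /andP[Kk /andP[/eqP e /forallP H]]]|[k Kk [e H]]].
  by exists k => //; split => // j ne; apply/eqP; move: (H j); rewrite ne.
exists k; rewrite Kk e eqxx /=; apply/forallP => j; apply/implyP => ne.
by rewrite H.
Qed.

Lemma mkunit i (k : {unit R}) : {u : {unit (Ri i)} | val u = pi i (val k)}.
Proof. by exists (FinRing.Unit (rmorph_unit (pi i) (valP k))). Qed.

Lemma Kc1 i : 1%g \in Kcomp pi K i.
Proof.
apply/KcompP; exists 1%g => //; split; first by rewrite /= rmorph1.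
by move=> j _; rewrite /= rmorph1.
Qed.

Lemma KcM i a b : a \in Kcomp pi K i -> b \in Kcomp pi K i -> (a * b)%g \in Kcomp pi K i.
Proof.
move=> /KcompP[k Kk [ek Hk]] /KcompP[k' Kk' [ek' Hk']].
apply/KcompP; exists (k * k')%g; first exact: groupM.
rewrite !FinRing.val_unitM !rmorphM ek ek'; split => // j ne.
by rewrite rmorphM Hk // Hk' // mulr1.
Qed.

Lemma KcV i a : a \in Kcomp pi K i -> (a^-1)%g \in Kcomp pi K i.
Proof.
move=> /KcompP[k Kk [ek Hk]].
apply/KcompP; exists (k^-1)%g; first by rewrite groupV.
have ku : val k \is a GRing.unit by exact: valP.
rewrite !FinRing.val_unitV; split; first by rewrite rmorphV // ek.
by move=> j ne; rewrite rmorphV // Hk // invr1.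
Qed.


Lemma stab_fwd (f : {perm R}) : f \in AutCyc_stab K 0 1 ->
  exists g : forall i, {perm (Ri i)},
    (forall i, g i \in AutCyc_stab (Kcomp pi K i) 0 1) /\
    (forall (x : R) (i : 'I_m), pi i (f x) = g i (pi i x)).
Proof.
rewrite inE => /andP[fA /andP[/eqP f0 /eqP f1]].
have fP := autP1 (group1 K) fA.
have key : forall i x y, (pi i (f x) == pi i (f y)) = (pi i x == pi i y).
  move=> i x y; case/cosetP: (fP x y) => k _ E.
  have ku : pi i (val k) \is a GRing.unit by apply: rmorph_unit; exact: valP.
  rewrite eq_sym -subr_eq0 -rmorphB E rmorphM (mulIr_eq0 _ (mulIr ku)).
  by rewrite rmorphB subr_eq0 eq_sym.
have keyE : forall i x y, pi i x = pi i y -> pi i (f x) = pi i (f y).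
  by move=> i x y e; apply/eqP; rewrite key e.
pose gfun i (a : Ri i) := pi i (f (odflt 0 [pick x | pi i x == a])).
have gE : forall i x, pi i (f x) = gfun i (pi i x).
  move=> i x; rewrite /gfun; case: pickP => [z /eqP hz|none] /=.
    by apply: keyE; rewrite hz.
  by move: (none x); rewrite eqxx.
have ginj : forall i, injective (gfun i).
  move=> i a b; case: (lift_ex a 0) => xa [ea _].
  case: (lift_ex b 0) => xb [eb _].
  rewrite -ea -eb -!gE => /eqP; rewrite key => /eqP //.
pose g i := perm (ginj i).
have gE' : forall i x, pi i (f x) = g i (pi i x) by move=> i x; rewrite permE gE.
exists g; split => // i.
rewrite inE; apply/andP; split; last first.
  by rewrite -(rmorph0 (pi i)) -gE' f0 rmorph0 eqxx -(rmorph1 (pi i)) -gE' f1 eqxx.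
apply: autP2; first exact: KcM.
move=> a b.
case: (lift_ex a 0) => x [ea ex].
case: (lift_ex b 1) => y [eb ey].
case/cosetP: (fP x y) => k Kk E.
have Hk : forall j, j != i -> pi j (val k) = 1.
  move=> j ne; have := congr1 (pi j) E.
  rewrite !rmorphB rmorphM (keyE j y 1) ?ey // (keyE j x 0) ?ex //.
  by rewrite f1 f0 rmorphB ey // ex // !rmorph1 !rmorph0 !subr0 mul1r => <-.
case: (mkunit i k) => u eu.
apply/cosetP; exists u; first by apply/KcompP; exists k.
by rewrite -ea -eb -!gE' -!rmorphB E rmorphM eu.
Qed.

Lemma stab_bwd (f : {perm R}) :
  (forall i, exists g : {perm (Ri i)}, g \in AutCyc_stab (Kcomp pi K i) 0 1 /\
        forall x, pi i (f x) = g (pi i x)) ->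
  f \in AutCyc_stab K 0 1.
Proof.
move=> H.
have H' : forall i, exists g : {perm (Ri i)},
   [/\ g \in AutCyc (Kcomp pi K i), g 0 = 0, g 1 = 1 &
        forall x, pi i (f x) = g (pi i x)].
  move=> i; case: (H i) => g [gS gf]; exists g.
  by move: gS; rewrite inE => /andP[gA /andP[/eqP -> /eqP ->]].
rewrite inE; apply/andP; split; last first.
  apply/andP; split; apply/eqP; apply: pi_inj => // i;
    case: (H' i) => g [_ g0 g1 gf]; by rewrite gf ?rmorph0 ?rmorph1.
apply: autP2; first by move=> *; apply: groupM.
move=> x y.
have : forall i, exists k : {unit R}, k \in K /\
   pi i (f y) - pi i (f x) = pi i (y - x) * pi i (val k) /\
   forall j, j != i -> pi j (val k) = 1.
  move=> i; case: (H' i) => g [gA _ _ gf].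
  case/cosetP: (autP1 (Kc1 i) gA (pi i x) (pi i y)) => u /KcompP[k Kk [ek Hk]] E.
  by exists k; rewrite !gf E ek rmorphB.
case/fin_all_exists => k Hk.
apply/cosetP; exists (\prod_i k i)%g; first by apply: group_prod => i _; case: (Hk i).
apply: pi_inj => // i.
have vP : val (\prod_i k i)%g = \prod_i val (k i).
  by rewrite (big_morph val (@FinRing.val_unitM _) (FinRing.val_unit1 _)).
rewrite vP rmorphB rmorphM rmorph_prod (bigD1 i) //= big1 ?mulr1.
  by case: (Hk i) => _ [-> _].
by move=> j ne; case: (Hk j) => _ [_ ->] //; rewrite eq_sym.
Qed.

End Prod.

Unset Implicit Arguments.
Set Strict Implicit.

Theorem theorem1p3 (m : nat) (R : finComUnitRingType)
  (Ri : 'I_m -> finComUnitRingType) (pi : forall i, {rmorphism R -> Ri i})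
  (K : {group {unit R}}) :
  is_direct_product pi ->
  (forall f : {perm R},
     f \in AutCyc_stab K 0 1 <->
     exists g : forall i, {perm (Ri i)},
       (forall i, g i \in AutCyc_stab (Kcomp pi K i) 0 1) /\
       (forall (x : R) (i : 'I_m), pi i (f x) = g i (pi i x)))
  /\
  (cyc_normal K <-> forall i, cyc_normal (Kcomp pi K i)).
Proof.
move=> hdp.
have P1 : forall f : {perm R}, f \in AutCyc_stab K 0 1 <->
     exists g : forall i, {perm (Ri i)},
       (forall i, g i \in AutCyc_stab (Kcomp pi K i) 0 1) /\
       (forall (x : R) (i : 'I_m), pi i (f x) = g i (pi i x)).
  move=> f; split; first exact: stab_fwd.
  case=> g [hg hf]; apply: (stab_bwd hdp) => i; exists (g i); split => // x.
split => //.
have NK : cyc_normal K <-> ringlike K.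
  by apply: normal_iff; [exact: group1|by move=> *; apply: groupM|by move=> *; rewrite groupV].
have NI : forall i, cyc_normal (Kcomp pi K i) <-> ringlike (Kcomp pi K i).
  by move=> i; apply: normal_iff; [exact: Kc1|exact: KcM|exact: KcV].
split.
  move=> /NK RL i; apply/NI => g gS.
  have : forall x, exists z, pi i z = g (pi i x) /\ forall j, j != i -> pi j z = pi j x.
    by move=> x; apply: lift_ex.
  case/fin_all_exists => ff Hff.
  have ffinj : injective ff.
    move=> x y e; apply: (pi_inj hdp) => j; case: (eqVneq j i) => [->|ne].
      by apply: (@perm_inj _ g); rewrite -(proj1 (Hff x)) -(proj1 (Hff y)) e.
    by rewrite -(proj2 (Hff x) j ne) -(proj2 (Hff y) j ne) e.
  pose f := perm ffinj.
  have fE : forall x, f x = ff x by move=> x; rewrite permE.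
  have fS : f \in AutCyc_stab K 0 1.
    apply: (stab_bwd hdp) => j; case: (eqVneq j i) => [->|ne].
      by exists g; split => // x; rewrite fE (proj1 (Hff x)).
    exists 1%g; split; last by move=> x; rewrite fE (proj2 (Hff x) j ne) perm1.
    rewrite inE !perm1 !eqxx andbT andbT; apply: autP2; first exact: KcM.
    move=> a b; rewrite !perm1; apply/cosetP; exists 1%g; first exact: Kc1.
    by rewrite mulr1.
  move=> a b.
  case: (lift_ex hdp a 0) => x [ea _]; case: (lift_ex hdp b 0) => y [eb _].
  have gf : forall z, g (pi i z) = pi i (f z) by move=> z; rewrite fE (proj1 (Hff z)).
  case: (RL f fS x y) => eD eM.
  by rewrite -ea -eb -!rmorphD -rmorphM !gf eD eM rmorphD rmorphM.
move=> H; apply/NK => f fS; case: (stab_fwd hdp fS) => g [hg hf] x y.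
split; apply: (pi_inj hdp) => i; rewrite ?rmorphD ?rmorphM !hf ?rmorphD ?rmorphM;
  by case: ((proj1 (NI i) (H i)) (g i) (hg i) (pi i x) (pi i y)).
Qed.
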